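(* Let $x_*$ be a feasible point of problem $(\mathcal{P})$ and $p\in\{1,\dots,d+1\}$. A $p$-point alternance exists at $x_*$ if and only if there exist $k_0\in\{1,\dots,p\}$, $i_0\in\{k_0,\dots,p\}$ and vectors $V_1,\dots,V_{k_0}\in\{\nabla_xf(x_*,\omega):\omega\in W(x_* )\}$, $V_{k_0+1},\dots,V_{i_0}\in\eta(x_* )$, $V_{i_0+1},\dots,V_p\in n_A(x_* )$ such that $\operatorname{rank}([V_1,\dots,V_p])=p-1$ and $\sum_{i=1}^p\beta_iV_i=0$ for some $\beta_i>0$, $i=1,\dots,p$. Furthermore, a collection $\{V_1,\dots,V_p\}$ of vectors of this form is a $p$-point alternance at $x_*$ if and only if $\operatorname{rank}([V_1,\dots,V_p])=p-1$ and $\sum_{i=1}^p\beta_iV_i=0$ for some $\beta_i>0$.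
   Context: Setting: $A\subseteq\mathbb{R}^d$ nonempty closed convex; $Y$ real Banach space with dual $Y^*$, pairing $\langle\cdot,\cdot\rangle$; $K\subset Y$ nonempty closed convex cone; $W$ compact Hausdorff; $f:\mathbb{R}^d\times W\to\mathbb{R}$ differentiable in $x$ with $f,\nabla_xf$ jointly continuous; $G:\mathbb{R}^d\to Y$ continuously Fréchet differentiable. $F(x)=\max_\omega f(x,\omega)$, $W(x)=\{\omega:f(x,\omega)=F(x)\}$; problem $(\mathcal{P})$: minimise $F$ s.t. $G(x)\in K$, $x\in A$. $K^*=\{y^*:\langle y^*,y\rangle\le0\ \forall y\in K\}$; $\mathcal{N}(x)=\{[DG(x)]^*\lambda:\lambda\in K^*,\langle\lambda,G(x)\rangle=0\}$ where $[DG(x)]^*\lambda\in\mathbb{R}^d$ satisfies $\langle[DG(x)]^*\lambda,h\rangle=\langle\lambda,DG(x)h\rangle$; $N_A(x)$ is the normal cone of convex analysis to $A$ at $x$. Fix $Z\subset\mathbb{R}^d$ consisting of $d$ linearly independent vectors, and sets $\eta(x_* )\subseteq\mathcal{N}(x_* )$, $n_A(x_* )\subseteq N_A(x_* )$ whose convex conic hulls are $\mathcal{N}(x_* )$ and $N_A(x_* )$. A $p$-point alternance exists at $x_*$ if there exist $k_0\in\{1,\dots,p\}$, $i_0\in\{k_0,\dots,p\}$, vectors $V_1,\dots,V_{k_0}\in\{\nabla_xf(x_*,\omega):\omega\in W(x_* )\}$, $V_{k_0+1},\dots,V_{i_0}\in\eta(x_* )$, $V_{i_0+1},\dots,V_p\in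 n_A(x_* )$ (ranges with upper index less than lower index are empty), and $V_{p+1},\dots,V_{d+1}\in Z$ such that the determinants $\Delta_s=\det[V_1,\dots,V_{s-1},V_{s+1},\dots,V_{d+1}]$ satisfy $\Delta_s\ne0$ for $s\le p$, $\operatorname{sign}\Delta_s=-\operatorname{sign}\Delta_{s+1}$ for $s\le p-1$, and $\Delta_s=0$ for $s\in\{p+1,\dots,d+1\}$; the collection $\{V_1,\dots,V_p\}$ is then called a $p$-point alternance at $x_*$. *)

(* Defs.v *)
From HB Require Import structures.
From mathcomp Require Import all_boot all_order all_algebra.
From mathcomp Require Import all_classical all_reals all_analysis.
Set Implicit Arguments. Unset Strict Implicit. Unset Printing Implicit Defensive.
Import Order.TTheory GRing.Theory Num.Theory.
Import numFieldNormedType.Exports.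
Local Open Scope classical_set_scope.
Local Open Scope ring_scope.

Section Defs.
Variable R : realType.
Variable d : nat.

Definition dot (u v : 'rV[R]_d) : R := \sum_(i < d) u 0 i * v 0 i.

Definition evec (i : 'I_d) : 'rV[R]_d := delta_mx 0 i.

Definition convexS (V : lmodType R) (S : set V) :=
  forall a b (t : R), S a -> S b -> 0 <= t <= 1 -> S (t *: a + (1 - t) *: b).

Definition closed_convex_cone (Y : normedModType R) (K : set Y) :=
  K !=set0 /\ closed K /\ convexS K /\
  (forall (t : R) y, 0 <= t -> K y -> K (t *: y)).

Definition gradx (W : Type) (f : 'rV[R]_d -> W -> R) (x : 'rV[R]_d) (w : W)
  : 'rV[R]_d := \row_i ('d (fun y => f y w) x (evec i)).

Definition Fmax (W : Type) (f : 'rV[R]_d -> W -> R) (x : 'rV[R]_d) : R :=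
  sup (range (f x)).
Definition Wact (W : Type) (f : 'rV[R]_d -> W -> R) (x : 'rV[R]_d) : set W :=
  [set w | f x w = Fmax f x].

Definition is_dual (Y : normedModType R) (lam : Y -> R) :=
  (forall (a : R) (u v : Y), lam (a *: u + v) = a * lam u + lam v) /\
  continuous lam.

(* K^* (negative polar cone, as in the paper) *)
Definition Kstar (Y : normedModType R) (K : set Y) : set (Y -> R) :=
  [set lam | is_dual lam /\ forall y, K y -> lam y <= 0].

(* [DG(x)]^* lam, characterised by <[DG(x)]^* lam, h> = <lam, DG(x) h> *)
Definition adjDG (Y : normedModType R) (G : 'rV[R]_d -> Y) (x : 'rV[R]_d)
  (lam : Y -> R) : 'rV[R]_d := \row_i lam ('d G x (evec i)).

Definition Ncal (Y : normedModType R) (G : 'rV[R]_d -> Y) (K : set Y)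
  (x : 'rV[R]_d) : set 'rV[R]_d :=
  [set v | exists lam, Kstar K lam /\ lam (G x) = 0 /\ v = adjDG G x lam].

Definition NA (A : set 'rV[R]_d) (x : 'rV[R]_d) : set 'rV[R]_d :=
  [set v | forall a, A a -> dot v (a - x) <= 0].

(* convex conic hull: all finite nonnegative combinations (0 included) *)
Definition conic_hull (S : set 'rV[R]_d) : set 'rV[R]_d :=
  [set v | exists (n : nat) (c : 'I_n -> R) (s : 'I_n -> 'rV[R]_d),
     (forall i, 0 <= c i) /\ (forall i, S (s i)) /\ v = \sum_(i < n) c i *: s i].

(* Delta_s = det [V_1,...,V_{s-1},V_{s+1},...,V_{d+1}]  (1-based indices;
   the vectors are taken as rows, which does not change the determinant) *)
Definition Delta (V : nat -> 'rV[R]_d) (s : nat) : R :=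
  \det (\matrix_(j < d, k < d) V (if (j.+1 < s)%N then j.+1 else j.+2) 0 k).

Definition of_form (S1 S2 S3 : set 'rV[R]_d) (p k0 i0 : nat)
  (V : nat -> 'rV[R]_d) :=
  [/\ (1 <= k0 <= p)%N, (k0 <= i0 <= p)%N,
      (forall t, (1 <= t <= k0)%N -> S1 (V t)),
      (forall t, (k0 < t <= i0)%N -> S2 (V t)) &
      (forall t, (i0 < t <= p)%N -> S3 (V t))].

(* V_1..V_p can be completed by V_{p+1},...,V_{d+1} in Z so that the
   determinant conditions of the alternance hold *)
Definition alternance_dets (Z : 'I_d -> 'rV[R]_d) (p : nat)
  (V : nat -> 'rV[R]_d) :=
  exists V' : nat -> 'rV[R]_d,
    [/\ (forall t, (1 <= t <= p)%N -> V' t = V t),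
        (forall t, (p < t <= d.+1)%N -> exists j, V' t = Z j),
        (forall s, (1 <= s <= p)%N -> Delta V' s != 0),
        (forall s, (1 <= s <= p.-1)%N ->
            Num.sg (Delta V' s) = - Num.sg (Delta V' s.+1)) &
        (forall s, (p < s <= d.+1)%N -> Delta V' s = 0)].

Definition rank_pos_comb (p : nat) (V : nat -> 'rV[R]_d) :=
  \rank (\matrix_(i < p, k < d) V i.+1 0 k) = p.-1 /\
  exists beta : nat -> R,
    (forall i, (1 <= i <= p)%N -> 0 < beta i) /\
    \sum_(1 <= i < p.+1) beta i *: V i = 0.

End Defs.

(* Main.v *)
Require Import Defs.
From HB Require Import structures.
From mathcomp Require Import all_boot all_order all_algebra.
From mathcomp Require Import all_classical all_reals all_analysis.
From mathcomp Require Import zify ring lra.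
Import Order.TTheory GRing.Theory Num.Theory.
Import numFieldNormedType.Exports.
Local Open Scope classical_set_scope.
Local Open Scope ring_scope.

Section LA.
Variable R : realType.
Variable d : nat.

Definition MV (V : nat -> 'rV[R]_d) : 'M[R]_(d.+1, d) :=
  \matrix_(i < d.+1, k < d) V i.+1 0 k.

Lemma row_matrix_fun m (F : 'I_m -> 'rV[R]_d) i :
  row i (\matrix_(j < m, k < d) F j 0 k) = F i.
Proof. by apply/rowP => k; rewrite !mxE. Qed.

Lemma Delta_row' V (i : 'I_d.+1) : Delta V i.+1 = \det (row' i (MV V)).
Proof.
rewrite /Delta; congr (\det _); apply/matrixP => j k; rewrite !mxE /=.
rewrite /bump ltnS; case: leqP => h //=.
Qed.

Lemma laplace_rows (M : 'M[R]_(d.+1, d)) :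
  \sum_(i < d.+1) ((-1) ^+ i * \det (row' i M)) *: row i M = 0.
Proof.
apply/rowP => k; rewrite summxE mxE.
pose N : 'M[R]_d.+1 := \matrix_(i, j)
  (if unlift ord_max j is Some j' then M i j' else M i k).
have hcol : col' ord_max N = M.
  by apply/matrixP => i j; rewrite !mxE liftK.
have hN0 : \det N = 0.
  rewrite -det_tr; apply: (@determinant_alternate _ _ _ ord_max (lift ord_max k)).
    exact: neq_lift.
  by move=> j; rewrite !mxE liftK unlift_none.
have := expand_det_col N ord_max; rewrite hN0 => /esym h.
have e : (-1) ^+ d * (-1) ^+ d = 1 :> R.
  by rewrite -exprD addnn -mul2n exprM sqrrN expr1n expr1n.
transitivity ((-1) ^+ d * \sum_i (N i ord_max * cofactor N i ord_max)).
  rewrite mulr_sumr; apply: eq_bigr => i _.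
  rewrite /cofactor hcol !mxE unlift_none /= exprD.
  transitivity (((-1)^+d * (-1)^+d) * ((-1)^+i * \det (row' i M) * M i k)); first by rewrite e mul1r.
  ring.

by rewrite h mulr0.
Qed.


Lemma rowsub_free m k n (f : 'I_k -> 'I_m) (A : 'M[R]_(m, n)) :
  injective f -> row_free A -> row_free (rowsub f A).
Proof.
move=> finj hA; apply: inj_row_free => v hv.
have h0 : (v *m rowsub f 1%:M) *m A = 0 by rewrite -mulmxA -rowsubE.
move/eqP: h0; rewrite mulmx_free_eq0 // => /eqP h.
apply/rowP => i; have := congr1 (fun (M : 'M[R]_(1, m)) => M 0 (f i)) h.
rewrite !mxE (bigD1 i) //= big1 ?addr0 => [|j hj]; rewrite !mxE; first by rewrite eqxx mulr1.
by rewrite (inj_eq finj) (negbTE hj) mulr0.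
Qed.

Lemma row_in_others m n (M : 'M[R]_(m.+1, n)) (c : 'rV[R]_m.+1) i :
  c *m M = 0 -> c 0 i != 0 -> (row i M <= row' i M)%MS.
Proof.
move=> hc hci.
have h : c 0 i *: row i M = - \sum_(j | j != i) c 0 j *: row j M.
  by move: hc; rewrite mulmx_sum_row (bigD1 i) //= => /eqP; rewrite addr_eq0 => /eqP.
have -> : row i M = (c 0 i)^-1 *: (c 0 i *: row i M) by rewrite scalerA mulVf ?scale1r.
rewrite h scalemx_sub // (eqmx_opp _) summx_sub // => j hj.
rewrite scalemx_sub //.
have [j' ->] : exists j', j = lift i j'.
  by case: (unliftP i j) hj => [j' ->|->]; [exists j'|rewrite eqxx].
have -> : row (lift i j') M = row j' (row' i M) by apply/rowP => k; rewrite !mxE.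
exact: row_sub.
Qed.

Lemma all_in_others m n (M : 'M[R]_(m.+1, n)) (c : 'rV[R]_m.+1) i :
  c *m M = 0 -> c 0 i != 0 -> (M <= row' i M)%MS.
Proof.
move=> hc hci; apply/row_subP => j.
case: (unliftP i j) => [j' ->|->]; last exact: row_in_others hc hci.
have -> : row (lift i j') M = row j' (row' i M) by apply/rowP => k; rewrite !mxE.
exact: row_sub.
Qed.

Lemma add_row_rank m n (A : 'M[R]_(m, n)) (z : 'rV[R]_n) :
  ~~ (z <= A)%MS -> \rank (z + A)%MS = (\rank A).+1.
Proof.
move=> hz.
have hlt : (\rank A < \rank (z + A)%MS)%N.
  have hs : (A <= z + A)%MS by rewrite addsmxSr.
  rewrite (ltn_leqif (mxrank_leqif_sup hs)).
  apply: contra hz => h; exact: submx_trans (addsmxSl _ _) h.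
have hle : (\rank (z + A)%MS <= \rank z + \rank A)%N by rewrite mxrank_adds_leqif.
have := rank_leq_row z; lia.
Qed.

Lemma ker_line m n (P : 'M[R]_(m, n)) (bv : 'rV[R]_m) :
  (0 < m)%N -> \rank P = m.-1 -> bv != 0 -> bv *m P = 0 ->
  forall cv : 'rV[R]_m, cv *m P = 0 -> exists lam, cv = lam *: bv.
Proof.
move=> hm hr hb0 hb cv hc; apply/sub_rVP.
have hk : \rank (kermx P) = 1%N by rewrite mxrank_ker hr; lia.
have hbk : (bv <= kermx P)%MS by apply/sub_kermxP.
have hrb : \rank bv = 1%N by rewrite rank_rV hb0.
have /eqmxP he : (bv == kermx P)%MS.
  by rewrite -(mxrank_leqif_eq hbk) hrb hk.
by rewrite he; apply/sub_kermxP.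
Qed.


Definition SZ (Z : 'I_d -> 'rV[R]_d) (J : seq 'I_d) : 'M[R]_d :=
  foldr (fun j A => (Z j + A)%MS) 0 J.

Lemma greedy (Z : 'I_d -> 'rV[R]_d) m (U : 'M[R]_(m, d)) (l : seq 'I_d) :
  exists J, \rank (U + SZ Z J)%MS = (\rank U + size J)%N /\
    forall j, j \in l -> (Z j <= U + SZ Z J)%MS.
Proof.
elim: l => [|z l [J [hr hs]]].
  by exists [::]; rewrite /= addsmx0 addn0.
have [hz|hz] := boolP (Z z <= U + SZ Z J)%MS.
  exists J; split => // j; rewrite inE => /orP[/eqP->//|]; exact: hs.
exists (z :: J); split.
  rewrite /= addsmxA (addsmxC U) -addsmxA add_row_rank // hr /=; lia.
have hle : (U + SZ Z J <= U + SZ Z (z :: J))%MS.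
  by rewrite /= addsmxS // addsmxSr.
move=> j; rewrite inE => /orP[/eqP->|hj].
  by rewrite /= (submx_trans _ (addsmxSr _ _)) // addsmxSl.
exact: submx_trans (hs j hj) hle.
Qed.

Lemma SZ_sub (Z : 'I_d -> 'rV[R]_d) m (B : 'M[R]_(m, d)) (J : seq 'I_d) :
  (forall j, j \in J -> (Z j <= B)%MS) -> (SZ Z J <= B)%MS.
Proof.
elim: J => [|j J IH] h /=; first exact: sub0mx.
rewrite addsmx_sub h ?mem_head // IH // => i hi.
by apply: h; rewrite inE hi orbT.
Qed.


Lemma MV_row V (i : 'I_d.+1) : row i (MV V) = V i.+1.
Proof. by apply/rowP => k; rewrite !mxE. Qed.

Lemma ident (V V' : nat -> 'rV[R]_d) p : (p <= d.+1)%N ->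
  (forall t, (1 <= t <= p)%N -> V' t = V t) ->
  (forall s, (p < s <= d.+1)%N -> Delta V' s = 0) ->
  \sum_(i < p) ((-1) ^+ i * Delta V' i.+1) *: V i.+1 = 0.
Proof.
move=> hp h1 h5.
have L := laplace_rows (MV V').
rewrite (bigID (fun i : 'I_d.+1 => (i < p)%N)) /= [X in _ + X]big1 ?addr0 in L; last first.
  move=> i hi.
  by rewrite -Delta_row' h5 ?mulr0 ?scale0r //; have := ltn_ord i; lia.
rewrite -[RHS]L (big_ord_widen d.+1 (fun i => ((-1) ^+ i * Delta V' i.+1) *: V i.+1) hp).
apply: eq_bigr => i hi; by rewrite -Delta_row' MV_row h1.

Qed.

Definition Pm p (V : nat -> 'rV[R]_d) : 'M[R]_(p, d) :=
  \matrix_(i < p, k < d) V i.+1 0 k.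

Lemma Pm_row p V (i : 'I_p) : row i (Pm p V) = V i.+1.
Proof. by apply/rowP => k; rewrite !mxE. Qed.

Lemma comb_vec p V (c : nat -> R) :
  (\row_(i < p) c i : 'rV[R]_p) *m Pm p V = \sum_(i < p) c i *: V i.+1.
Proof.
by rewrite mulmx_sum_row; apply: eq_bigr => i _; rewrite Pm_row mxE.
Qed.

Lemma sum_shift p (V : nat -> 'rV[R]_d) (b : nat -> R) :
  \sum_(1 <= i < p.+1) b i *: V i = \sum_(i < p) b i.+1 *: V i.+1.
Proof. by rewrite big_add1 /= big_mkord. Qed.


Lemma row_nz p (b : nat -> R) : (0 < p)%N -> 0 < b 1%N ->
  (\row_(i < p) b i.+1 : 'rV[R]_p) != 0.
Proof.
move=> hp hb; apply/eqP => /rowP /(_ (Ordinal hp)); rewrite !mxE /= => h.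
by move: hb; rewrite h ltxx.
Qed.

Lemma alt_to_rank (Z : 'I_d -> 'rV[R]_d) (V : nat -> 'rV[R]_d) p :
  (1 <= p <= d.+1)%N -> alternance_dets Z p V -> rank_pos_comb p V.
Proof.
move=> /andP[hp0 hp] [V' [h1 _ h3 h4 h5]].
set D := Delta V'.
have hid := @ident V V' p hp h1 h5.
set sig := Num.sg (D 1%N).
have hsg : forall i, (i < p)%N -> Num.sg ((-1) ^+ i * D i.+1) = sig.
  elim => [|i IH] hi; first by rewrite expr0 mul1r.
  have e := h4 i.+1 ltac:(lia).
  rewrite exprS mulN1r mulNr sgrN sgrM -[Num.sg (D i.+2)]opprK -e mulrN opprK.
  by rewrite -sgrM IH //; lia.
have hsum : \sum_(i < p) `|D i.+1| *: V i.+1 = 0.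
  transitivity (sig *: \sum_(i < p) ((-1) ^+ i * D i.+1) *: V i.+1); last by rewrite hid scaler0.
  rewrite scaler_sumr; apply: eq_bigr => i _.
  rewrite scalerA -(hsg i (ltn_ord i)) -normrEsg normrM normrX normrN1 expr1n mul1r //.
have hbpos : forall t, (1 <= t <= p)%N -> 0 < `|D t| by move=> t ht; rewrite normr_gt0 h3.
split; last first.
  by exists (fun t => `|D t|); split => //; rewrite sum_shift.
set P := Pm p V.
set bv := (\row_(i < p) `|D i.+1| : 'rV[R]_p).
have hb : bv *m P = 0 by rewrite (comb_vec p V (fun i => `|D i.+1|)).

have hb0 : bv != 0.
  by apply: (@row_nz p (fun t => `|D t|) hp0); apply: hbpos; lia.
have hle : (\rank P <= p.-1)%N.
  have hbk : (bv <= kermx P)%MS by apply/sub_kermxP.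
  have := mxrankS hbk; rewrite mxrank_ker rank_rV hb0 /=.
  have := rank_leq_row P; lia.
have hpd : (p.-1 <= d)%N by lia.
pose Q := rowsub (fun i : 'I_p.-1 => widen_ord hpd i) (row' ord0 (MV V')).
have hQ : row_free Q.
  apply: rowsub_free.
    by move=> a b /(congr1 val) /= /val_inj.
  by rewrite row_free_unit unitmxE unitfE -Delta_row' h3.
have hQP : (Q <= P)%MS.
  apply/row_subP => r.
  have hr : (r.+1 < p)%N by have := ltn_ord r; lia.
  have -> : row r Q = row (Ordinal hr) P.
    rewrite row_rowsub Pm_row; apply/rowP => k; rewrite !mxE /= h1 //.
  exact: row_sub.
have := mxrankS hQP; move: hQ; rewrite /row_free => /eqP ->.
by move=> hge; apply/eqP; rewrite eqn_leq hle hge.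
Qed.


Lemma rank_to_alt (Z : 'I_d -> 'rV[R]_d) (V : nat -> 'rV[R]_d) p :
  row_free (\matrix_(j < d, k < d) Z j 0 k) ->
  (1 <= p <= d.+1)%N -> rank_pos_comb p V -> alternance_dets Z p V.
Proof.
move=> hZ /andP[hp0 hp] [hr [b [hb hs]]].
rewrite sum_shift in hs.
set P := Pm p V.
set bv := (\row_(i < p) b i.+1 : 'rV[R]_p).
have hbv : bv *m P = 0 by rewrite (comb_vec p V (fun i => b i.+1)).
have hbv0 : bv != 0 by apply: (@row_nz p b hp0); apply: hb; lia.
have hker := @ker_line p d P bv hp0 hr hbv0 hbv.
have [J [hJr hJs]] := @greedy Z p P (enum 'I_d).
set Zm := \matrix_(j < d, k < d) Z j 0 k.
have hfull : (1%:M <= P + SZ Z J)%MS.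
  apply: (@submx_trans _ _ _ _ _ _ Zm).
    by rewrite sub1mx row_full_unit -row_free_unit.
  apply/row_subP => j; rewrite row_matrix_fun; apply: hJs; exact: mem_enum.
have hsize : size J = (d.+1 - p)%N.
  have h1 := mxrankS hfull; rewrite mxrank1 in h1.
  have h2 := rank_leq_col (P + SZ Z J)%MS.
  move: hJr; rewrite hr; lia.
pose V' := fun t => if (t <= p)%N then V t else nth 0 (map Z J) (t - p.+1).
set M := MV V'.
have hPM : (P + SZ Z J <= M)%MS.
  rewrite addsmx_sub; apply/andP; split.
    apply/row_subP => r; rewrite Pm_row.
    have hr' : (r < d.+1)%N by have := ltn_ord r; lia.
    have -> : V r.+1 = row (Ordinal hr') M by rewrite MV_row /V' /= ltn_ord.
    exact: row_sub.
  apply: SZ_sub => j hj.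
  have hidx : (index j J < size J)%N by rewrite index_mem.
  have hlt : (p + index j J < d.+1)%N by lia.
  have -> : Z j = row (Ordinal hlt) M.
    rewrite MV_row /V' /= ifN; last by lia.
    have -> : ((p + index j J).+1 - p.+1 = index j J)%N by lia.
    by rewrite (nth_map j) // nth_index.
  exact: row_sub.
pose cv := (\row_(i < d.+1) (if (i < p)%N then b i.+1 else 0) : 'rV[R]_d.+1).
have hc : cv *m M = 0.
  rewrite mulmx_sum_row -[RHS]hs (big_ord_widen d.+1 (fun i => b i.+1 *: V i.+1) hp).
  rewrite [RHS]big_mkcond /=; apply: eq_bigr => i _; rewrite mxE MV_row /V'.
  case: ifP => hi; last by rewrite scale0r.
  by [].
have hV'p : forall t, (t <= p)%N -> V' t = V t by move=> t ht; rewrite /V' ht.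
have hD5 : forall s, (p < s <= d.+1)%N -> Delta V' s = 0.
  move=> [//|s] hs1.
  have hsd : (s < d.+1)%N by lia.
  rewrite (Delta_row' V' (Ordinal hsd)).
  have hpd : (p <= d)%N by lia.
  have hd : (0 < d)%N by lia.
  pose u := (\row_(j < d) (if (j < p)%N then b j.+1 else 0) : 'rV[R]_d).
  have hu : u *m row' (Ordinal hsd) M = 0.
    rewrite mulmx_sum_row -[RHS]hs (big_ord_widen d (fun i => b i.+1 *: V i.+1) hpd).
    rewrite [RHS]big_mkcond /=; apply: eq_bigr => j _; rewrite mxE.
    case: ifP => hj; last by rewrite scale0r.
    congr (_ *: _); apply/rowP => k; rewrite !mxE /= /bump.
    have -> : (s <= j)%N = false by lia.
    by rewrite add0n /V' ifT //; lia.
  have hu0 : u != 0.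
    apply/eqP => /rowP /(_ (Ordinal hd)); rewrite !mxE /= ifT //.
    by move/eqP; rewrite gt_eqF // hb.
  apply/eqP; apply: contraT => hdet.
  have hfree : row_free (row' (Ordinal hsd) M) by rewrite row_free_unit unitmxE unitfE.
  by move: hu; move/eqP; rewrite mulmx_free_eq0 // (negbTE hu0).
have h1' : forall t, (1 <= t <= p)%N -> V' t = V t.
  by move=> t /andP[_ ht]; rewrite hV'p.
have hid := @ident V V' p hp h1' hD5.
pose gv := (\row_(i < p) ((-1) ^+ i * Delta V' i.+1) : 'rV[R]_p).
have hg : gv *m P = 0 by rewrite (comb_vec p V (fun i => (-1) ^+ i * Delta V' i.+1)).
have [lam hlam] := hker gv hg.
have hcoef : forall i, (i < p)%N -> (-1) ^+ i * Delta V' i.+1 = lam * b i.+1.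
  move=> i hi; have := congr1 (fun v : 'rV[R]_p => v 0 (Ordinal hi)) hlam.
  by rewrite !mxE.
rewrite /alternance_dets; exists V'; split.
- by move=> t /andP[_ ht]; rewrite hV'p.
- move=> t ht.
  have hd : (0 < d)%N by lia.
  exists (nth (Ordinal hd) J (t - p.+1)); rewrite /V' ifN; last by lia.
  by rewrite (nth_map (Ordinal hd)) // hsize; lia.
- move=> [//|s] hs1.
  have hsd : (s < d.+1)%N by lia.
  have -> : Delta V' s.+1 = \det (row' (Ordinal hsd) M) by rewrite (Delta_row' V' (Ordinal hsd)).
  rewrite -unitfE -unitmxE -row_full_unit -sub1mx.
  apply: (submx_trans hfull); apply: (submx_trans hPM).
  apply: (@all_in_others d d M cv (Ordinal hsd) hc).
  by rewrite mxE /= ifT; [apply/lt0r_neq0/hb|]; lia.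
- move=> [//|i] hs1.
  have e1 := hcoef i ltac:(lia).
  have e2 := hcoef i.+1 ltac:(lia).
  have ha : (-1) ^+ i * (-1) ^+ i = 1 :> R.
    by rewrite -exprD addnn -mul2n exprM sqrrN expr1n expr1n.
  have x : Delta V' i.+1 = (-1) ^+ i * (lam * b i.+1).
    by rewrite -e1 mulrA ha mul1r.
  have y : Delta V' i.+2 = - ((-1) ^+ i * (lam * b i.+2)).
    by rewrite -e2 exprS mulN1r mulNr mulrN opprK mulrA ha mul1r.
  by rewrite x y sgrN opprK !sgrM (gtr0_sg (hb i.+1 ltac:(lia))) (gtr0_sg (hb i.+2 ltac:(lia))) !mulr1.
- exact: hD5.
Qed.

End LA.

Theorem proposition1
  (R : realType) (d : nat)
  (A : set 'rV[R]_d)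
  (Y : completeNormedModType R) (K : set Y)
  (W : topologicalType)
  (f : 'rV[R]_d -> W -> R) (G : 'rV[R]_d -> Y)
  (Z : 'I_d -> 'rV[R]_d)
  (xs : 'rV[R]_d) (eta nA : set 'rV[R]_d) (p : nat)
  (* standing assumptions *)
  (hA : [/\ A !=set0, closed A & convexS A])
  (hK : closed_convex_cone K)
  (hW : compact [set: W] /\ hausdorff_space W)
  (hfdiff : forall (x : 'rV[R]_d) (w : W), differentiable (fun y => f y w) x)
  (hfcont : continuous (fun q : 'rV[R]_d * W => f q.1 q.2))
  (hgcont : continuous (fun q : 'rV[R]_d * W => gradx f q.1 q.2))
  (hGdiff : forall x : 'rV[R]_d, differentiable G x)
  (hGcont : forall h : 'rV[R]_d, continuous (fun x => 'd G x h))
  (hZ : row_free (\matrix_(j < d, k < d) Z j 0 k))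
  (* xs is feasible *)
  (hfeas : K (G xs) /\ A xs)
  (* the sets eta and n_A at the point xs *)
  (heta : eta `<=` Ncal G K xs /\ conic_hull eta = Ncal G K xs)
  (hnA : nA `<=` NA A xs /\ conic_hull nA = NA A xs)
  (hp : (1 <= p <= d.+1)%N) :
  let S1 := [set v | exists2 w, Wact f xs w & v = gradx f xs w] in
  ((exists k0 i0 V, of_form S1 eta nA p k0 i0 V /\ alternance_dets Z p V)
   <-> (exists k0 i0 V, of_form S1 eta nA p k0 i0 V /\ rank_pos_comb p V))
  /\
  (forall k0 i0 V, of_form S1 eta nA p k0 i0 V ->
     (alternance_dets Z p V <-> rank_pos_comb p V)).
Proof.
move=> S1.
have key : forall V, alternance_dets Z p V <-> rank_pos_comb p V.
  by move=> V; split; [exact: alt_to_rank | exact: rank_to_alt].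
split.
  split => -[k0 [i0 [V [hf ha]]]]; exists k0, i0, V; split => //; exact/key.
by move=> k0 i0 V _; exact: key.
Qed.
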